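(* Suppose $pn\ge\log n$. Then for all sufficiently large $n$ and every integer $t$ with $n^{24/25}\le t\le\frac n5$, with probability at least $1-n^{-t/120}$, every set $T$ of $t$ vertices of $G(n,p)$ has at least twice as many edges between $T$ and $[n]\setminus T$ as edges with both endpoints in $T$.
   Context: $G(n,p)$ is the Erdős–Rényi random graph on $[n]$, each edge present independently with probability $p$. *)

(* Defs.v *)
From Stdlib Require Import Reals.
From mathcomp Require Import all_boot.
Set Implicit Arguments. Unset Strict Implicit. Unset Printing Implicit Defensive.

(* Vertex set [n] is 'I_n.  A simple graph on [n] is a set of pairs (i,j)
   with i < j (each unordered edge represented once). *)
Definition pairs (n : nat) : {set 'I_n * 'I_n} := [set e : 'I_n * 'I_n | (nat_of_ord e.1 < nat_of_ord e.2)%N].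

Definition in_edges (n : nat) (G : {set 'I_n * 'I_n}) (T : {set 'I_n}) : nat :=
  #|[set e in G | (e.1 \in T) && (e.2 \in T)]|.

Definition cross_edges (n : nat) (G : {set 'I_n * 'I_n}) (T : {set 'I_n}) : nat :=
  #|[set e in G | (e.1 \in T) != (e.2 \in T)]|.

Definition good (n t : nat) (G : {set 'I_n * 'I_n}) : bool :=
  [forall T : {set 'I_n}, (#|T| == t) ==> (2 * in_edges G T <= cross_edges G T)%N].

Definition gnp_weight (n : nat) (p : R) (G : {set 'I_n * 'I_n}) : R :=
  Rmult (pow p #|G|) (pow (Rminus 1 p) (#|pairs n| - #|G|)).

Definition gnp_prob (n : nat) (p : R) (P : pred {set 'I_n * 'I_n}) : R :=
  \big[Rplus/R0]_(G : {set 'I_n * 'I_n} | (G \subset pairs n) && P G) gnp_weight p G.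

(* Main.v *)
Require Import Defs.
From Stdlib Require Import Reals.
From mathcomp Require Import all_boot all_order all_algebra.
From mathcomp Require Import Rstruct lra.
Import Order.TTheory GRing.Theory Num.Theory.
Set Implicit Arguments. Unset Strict Implicit. Unset Printing Implicit Defensive.
Local Open Scope ring_scope.

Lemma prod_subsets (I : finType) (S : {set I}) (F G : I -> R) :
  \sum_(J : {set I} | J \subset S) \prod_(i in S) (if i \in J then F i else G i)
  = \prod_(i in S) (F i + G i).
Proof.
rewrite [RHS](big_mkcond (fun i => i \in S)) /=.
have -> : \prod_i (if i \in S then F i + G i else 1)
   = \prod_i ((if i \in S then F i else 0) + (if i \in S then G i else 1)).
  by apply: eq_bigr => i _; case: (i \in S); rewrite ?addr0 ?add0r.
rewrite bigA_distr.
rewrite [RHS](bigID (fun J : {set I} => J \subset S)) /=.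
rewrite [X in _ = _ + X]big1 ?addr0; last first.
  move=> J /subsetPn [i iJ iS].
  rewrite (bigD1 i) //= iJ (negbTE iS) mul0r //.
apply: eq_bigr => J JS.
rewrite big_mkcond /=; apply: eq_bigr => i _.
case: ifP => iS; first by [].
by case: ifP => // iJ; move: (subsetP JS i iJ); rewrite iS.
Qed.

Lemma weight_prod n p (G : {set 'I_n * 'I_n}) : G \subset pairs n ->
  gnp_weight p G = \prod_(e in pairs n) (if e \in G then p else 1 - p).
Proof.
move=> GP; rewrite /gnp_weight !RpowE (bigID (fun e => e \in G)) /=.
rewrite (eq_bigr (fun _ => p)); last by move=> e /andP[_ ->].
rewrite [X in _ * X](eq_bigr (fun _ => 1 - p)); last by move=> e /andP[_ /negbTE ->].
rewrite (eq_bigl (fun e => e \in pairs n :&: G)); last by move=> e; rewrite !inE.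
rewrite [X in _ * X](eq_bigl (fun e => e \in pairs n :\: G)); last by move=> e; rewrite !inE andbC.
rewrite !prodr_const cardsD.
by rewrite (setIidPr GP).
Qed.
Definition kk n (T : {set 'I_n}) (e : 'I_n * 'I_n) :=
  @id R (if (e.1 \in T) && (e.2 \in T) then 5/4 else if (e.1 \in T) != (e.2 \in T) then -(1/3) else 0).

Lemma edge_prod n (T : {set 'I_n}) (G : {set 'I_n * 'I_n}) : G \subset pairs n ->
  \prod_(e in pairs n) (if e \in G then 1 + kk T e else 1)
  = (9/4) ^+ in_edges G T * (2/3) ^+ cross_edges G T.
Proof.
move=> GP; rewrite -big_mkcondr /=.
rewrite (eq_bigl (fun e => e \in G)); last first.
  by move=> e; apply/andP/idP => [[]//|eG]; split=> //; apply: (subsetP GP).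
rewrite (bigID (fun e : 'I_n * 'I_n => (e.1 \in T) && (e.2 \in T))) /=.
rewrite [X in _ * X](bigID (fun e : 'I_n * 'I_n => (e.1 \in T) != (e.2 \in T))) /=.
rewrite [X in _ * (_ * X)]big1 ?mulr1; last first.
  by move=> e /andP[/andP[_ /negbTE h1] /negbTE h2]; rewrite /kk /id h1 h2 addr0.
rewrite (eq_bigr (fun _ => 9/4)); last first.
  by move=> e /andP[_ h]; rewrite /kk /id h; lra.
rewrite [X in _ * X](eq_bigr (fun _ => 2/3)); last first.
  move=> e /andP[/andP[_ /negbTE h1] h2]; rewrite /kk /id h1 h2; lra.
rewrite (eq_bigl (fun e => e \in [set e in G | (e.1 \in T) && (e.2 \in T)])); last first.
  by move=> e; rewrite !inE.
rewrite [X in _ * X](eq_bigl (fun e => e \in [set e in G | (e.1 \in T) != (e.2 \in T)])); last first.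
  move=> e; rewrite !inE; case: (e \in G) => //=.
  by case: (e.1 \in T); case: (e.2 \in T).
by rewrite !prodr_const.
Qed.

Lemma bad_ge1 (i c : nat) : ~~ (2 * i <= c)%N -> 1 <= @id R (9/4) ^+ i * (2/3) ^+ c.
Proof.
rewrite -ltnNge => h.
have -> : @id R (9/4) ^+ i = (3/2) ^+ (2 * i).
  by rewrite exprM; congr (_ ^+ _); rewrite expr2; lra.
have [d ->] : exists d, (2 * i = c + d)%N.
  by exists (2 * i - c)%N; rewrite subnKC // ltnW.
rewrite exprD mulrAC -exprMn.
have -> : @id R (3 / 2 * (2 / 3)) = 1 by lra.
rewrite expr1n mul1r; apply: exprn_ege1; lra.
Qed.

Lemma sum_if (A : finType) (T : {set A}) (a b : R) :
  \sum_j (if j \in T then a else b) = a * #|T|%:R + b * #|~:T|%:R.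
Proof.
rewrite (bigID (mem T)) /= (eq_bigr (fun=> a)); last by move=> j ->.
rewrite [X in _ + X](eq_bigr (fun=> b)); last by move=> j /negbTE ->.
rewrite (eq_bigl (mem T)) // [X in _ + X](eq_bigl (mem (~: T))); last by move=> j; rewrite !inE.
by rewrite !sumr_const !mulr_natr.
Qed.

Lemma sum_kk_all n (T : {set 'I_n}) :
  \sum_e kk T e = 5/4 * #|T|%:R ^+ 2 - 2/3 * #|T|%:R * #|~:T|%:R.
Proof.
rewrite -(pair_bigA _ (fun i j => kk T (i, j))) /=.
rewrite (eq_bigr (fun i => if i \in T then 5/4 * #|T|%:R - 1/3 * #|~:T|%:R
                            else - (1/3) * #|T|%:R)); last first.
  move=> i _; rewrite /kk /id /=; case: (i \in T) => /=.
    rewrite (eq_bigr (fun j => if j \in T then 5/4 else -(1/3))); last first.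
      by move=> j _; case: (j \in T).
    by rewrite sum_if; lra.
  rewrite (eq_bigr (fun j => if j \in T then -(1/3) else 0)); last first.
    by move=> j _; case: (j \in T).
  by rewrite sum_if; lra.
rewrite sum_if; rewrite expr2; lra.
Qed.

Lemma sum_kk_pairs n (T : {set 'I_n}) :
  2 * \sum_(e in pairs n) kk T e <= \sum_e kk T e.
Proof.
have sw : \sum_(e in pairs n) kk T e = \sum_(e : 'I_n * 'I_n | (e.2 < e.1)%N) kk T e.
  rewrite (reindex_inj (h := fun e : 'I_n * 'I_n => (e.2, e.1)) (P := fun e : 'I_n * 'I_n => (e.2 < e.1)%N)); last first.
    by move=> [a b] [c d] /= [-> ->].
  apply: eq_big => [e|e _]; first by rewrite inE.
  by rewrite /kk /id /= andbC eq_sym.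
have -> : \sum_e kk T e = \sum_(i : 'I_n * 'I_n | (i.1 < i.2)%N) kk T i +
   (\sum_(i : 'I_n * 'I_n | ~~ (i.1 < i.2)%N && (i.2 < i.1)%N) kk T i +
    \sum_(i : 'I_n * 'I_n | ~~ (i.1 < i.2)%N && ~~ (i.2 < i.1)%N) kk T i).
  by rewrite (bigID (fun e : 'I_n * 'I_n => (e.1 < e.2)%N)) /= [X in _ + X](bigID (fun e : 'I_n * 'I_n => (e.2 < e.1)%N)).
have -> : \sum_(i : 'I_n * 'I_n | (i.1 < i.2)%N) kk T i = \sum_(e in pairs n) kk T e.
  by apply: eq_bigl => e; rewrite inE.
have -> : \sum_(i : 'I_n * 'I_n | ~~ (i.1 < i.2)%N && (i.2 < i.1)%N) kk T i = \sum_(e : 'I_n * 'I_n | (e.2 < e.1)%N) kk T e.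
  apply: eq_bigl => e; case: ltngtP => //.
rewrite -sw.
have : 0 <= \sum_(i : 'I_n * 'I_n | ~~ (i.1 < i.2)%N && ~~ (i.2 < i.1)%N) kk T i.
  apply: sumr_ge0 => [[a b]] /= /andP[h1 h2].
  have -> : a = b.
    by move: h1 h2; rewrite -!leqNgt => h1 h2; apply/val_inj/eqP; rewrite eqn_leq h1 h2.
  by rewrite /kk /id; case: (b \in T) => /=; lra.
lra.
Qed.

Lemma weight_ge0 n p (G : {set 'I_n * 'I_n}) : 0 <= p <= 1 -> 0 <= gnp_weight p G.
Proof.
move=> /andP[p0 p1]; rewrite /gnp_weight !RpowE.
by apply: mulr_ge0; apply: exprn_ge0; rewrite ?subr_ge0.
Qed.

Lemma bad_T n p (T : {set 'I_n}) : 0 <= p <= 1 ->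
  \sum_(G : {set 'I_n * 'I_n} | (G \subset pairs n) && ~~ (2 * in_edges G T <= cross_edges G T)%N)
     gnp_weight p G
  <= exp (p * \sum_(e in pairs n) kk T e).
Proof.
move=> hp; have /andP[p0 p1] := hp.
have kkb : forall e, -(1/3) <= kk T e <= 5/4.
  move=> e; rewrite /kk /id; case: ifP => _; first by lra.
  by case: ifP => _; lra.
pose H (G : {set 'I_n * 'I_n}) := \prod_(e in pairs n) (if e \in G then 1 + kk T e else 1).
have H0 : forall G, 0 <= H G.
  move=> G; apply: prodr_ge0 => e _; case: ifP => _ //.
  by have := kkb e; lra.
apply: (@le_trans _ _ (\sum_(G : {set 'I_n * 'I_n} | G \subset pairs n) gnp_weight p G * H G)).
  rewrite [X in _ <= X](bigID (fun G => ~~ (2 * in_edges G T <= cross_edges G T)%N)) /=.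
  rewrite -[X in X <= _]addr0.
  apply: lerD; last first.
    by apply: sumr_ge0 => G _; apply: mulr_ge0 => //; apply: weight_ge0.
  apply: ler_sum => G /andP[GP bad].
  rewrite -[X in X <= _]mulr1; apply: ler_wpM2l; first exact: weight_ge0.
  by rewrite /H edge_prod //; apply: bad_ge1.
have -> : \sum_(G : {set 'I_n * 'I_n} | G \subset pairs n) gnp_weight p G * H G
   = \sum_(G : {set 'I_n * 'I_n} | G \subset pairs n)
       \prod_(e in pairs n) (if e \in G then p * (1 + kk T e) else 1 - p).
  apply: eq_bigr => G GP; rewrite weight_prod // /H -big_split /=.
  by apply: eq_bigr => e _; case: ifP => _; rewrite ?mulr1.
rewrite prod_subsets.
have -> : exp (p * \sum_(e in pairs n) kk T e) = \prod_(e in pairs n) exp (p * kk T e).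
  rewrite RmultE mulr_sumr; apply: (big_morph exp (fun x y => esym (expRD x y)) expR0).
apply: ler_prod => e _; apply/andP; split.
  by have := kkb e; nra.
have := exp_ineq1_le (p * kk T e) => /RleP; rewrite !RplusE !RmultE R1E; lra.
Qed.

Lemma exp_le (x y : R) : x <= y -> exp x <= exp y.
Proof.
move/RleP => h; apply/RleP.
by case: (Rle_lt_or_eq_dec _ _ h) => [/exp_increasing/Rlt_le //| ->]; apply: Rle_refl.
Qed.

Lemma total_mass n p : \sum_(G : {set 'I_n * 'I_n} | G \subset pairs n) gnp_weight p G = 1.
Proof.
under eq_bigr => G GP do rewrite weight_prod //.
by rewrite prod_subsets big1 // => e _; rewrite addrC subrK.
Qed.

Section Helpers.
Local Bind Scope ring_scope with R.
Definition Bnd (p : R) (t n : nat) : R := - (17/120) * p * t%:R * n%:R.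

Lemma sumkk_bound n (T : {set 'I_n}) : 5 * #|T|%:R <= n%:R :> R ->
  \sum_(e in pairs n) kk T e <= - (17/120) * #|T|%:R * n%:R.
Proof.
move=> h.
have := sum_kk_pairs T; rewrite sum_kk_all.
have e : #|T|%:R + #|~:T|%:R = n%:R :> R by rewrite -natrD cardsC card_ord.
rewrite -e in h *.
have u0 : 0 <= #|T|%:R :> R by apply: ler0n.
move: h u0; set u := #|T|%:R; set v := #|~:T|%:R => h u0 h2.
rewrite expr2 in h2; nra.
Qed.

Lemma fail_bound n (p : R) t : 0 <= p <= 1 -> 5 * t%:R <= n%:R :> R ->
  1 - 'C(n, t)%:R * exp (Bnd p t n) <= gnp_prob p (@good n t).
Proof.
move=> hp h5; have /andP[p0 p1] := hp.
have -> : gnp_prob p (@good n t)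
   = 1 - \sum_(G : {set 'I_n * 'I_n} | (G \subset pairs n) && ~~ good t G) gnp_weight p G.
  rewrite -(total_mass n p) (bigID (fun G => good t G)) /=.
  by rewrite addrK.
rewrite lerD2l lerN2.
pose bad (T : {set 'I_n}) (G : {set 'I_n * 'I_n}) := ~~ (2 * in_edges G T <= cross_edges G T)%N.
pose F (G : {set 'I_n * 'I_n}) (T : {set 'I_n}) := if bad T G then gnp_weight p G else 0.
have F0 : forall G T, 0 <= F G T by move=> G T; rewrite /F; case: ifP => // _; apply: weight_ge0.
apply: (@le_trans _ _ (\sum_(G : {set 'I_n * 'I_n} | (G \subset pairs n) && ~~ good t G)
                         \sum_(T : {set 'I_n} | #|T| == t) F G T)).
  apply: ler_sum => G /andP[GP /forallPn [T]]; rewrite negb_imply => /andP[cT bT].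
  rewrite (bigD1 T) //= -[X in X <= _]addr0; apply: lerD.
    by rewrite /F /bad bT.
  by apply: sumr_ge0.
apply: (@le_trans _ _ (\sum_(G : {set 'I_n * 'I_n} | G \subset pairs n)
                         \sum_(T : {set 'I_n} | #|T| == t) F G T)).
  rewrite [X in _ <= X](bigID (fun G => ~~ good t G)) /= -[X in X <= _]addr0.
  by apply: lerD => //; apply: sumr_ge0 => G _; apply: sumr_ge0.
rewrite exchange_big /=.
apply: (@le_trans _ _ (\sum_(T : {set 'I_n} | #|T| == t) exp (Bnd p t n))).
  apply: ler_sum => T /eqP cT.
  rewrite /F -big_mkcondr /=.
  apply: le_trans (bad_T T hp) _.
  apply: exp_le.
  have := sumkk_bound (T := T); rewrite cT => /(_ h5) hs.
  rewrite /Bnd RmultE; nra.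
rewrite (eq_bigl (mem [set T : {set 'I_n} | #|T| == t])); last by move=> T; rewrite !inE.
by rewrite sumr_const card_draws card_ord mulr_natl.
Qed.

Lemma ffact_le_exp n m : (n ^_ m <= n ^ m)%N.
Proof.
elim: m n => [|m IH] n //; rewrite ffactnS expnS leq_mul2l.
case: n => //= n; apply: leq_trans (IH n) _.
by case: (m) => // k; rewrite leq_exp2r.
Qed.

Lemma e_ge2 : 2 <= exp 1.
Proof. have := exp_ineq1_le 1 => /RleP; rewrite RplusE R1E; lra. Qed.

Lemma succ_pow m : m.+1%:R ^+ m <= exp 1 * m%:R ^+ m :> R.
Proof.
case: m => [|k]; first by rewrite !expr0 mulr1; have := e_ge2; lra.
set m := k.+1.
have m0 : 0 < m%:R :> R by rewrite ltr0n.
have h1 : m.+1%:R <= m%:R * exp (m%:R^-1) :> R.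
  have := exp_ineq1_le (m%:R^-1) => /RleP; rewrite RplusE R1E => h.
  have -> : m.+1%:R = m%:R * (1 + m%:R^-1) :> R.
    by rewrite mulrDr mulr1 mulfV ?gt_eqF // -natr1.
  by apply: ler_wpM2l => //; apply: ltW.
have h2 : m.+1%:R ^+ m <= (m%:R * exp (m%:R^-1)) ^+ m :> R.
  apply: lerXn2r; [by rewrite nnegrE ler0n | rewrite nnegrE | exact: h1].
  by apply: mulr_ge0; [apply: ltW | apply/RleP/Rlt_le/exp_pos].
apply: le_trans h2 _.
rewrite exprMn mulrC expRX.
have -> : m%:R^-1 *+ m = 1 :> R by rewrite -[m%:R^-1 *+ m]mulr_natr mulVf ?gt_eqF.
by []. Qed.

Lemma fact_bound m : m%:R ^+ m <= exp m%:R * (m`!)%:R :> R.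
Proof.
elim: m => [|m IH]; first by rewrite expr0 expR0 mul1r.
rewrite exprS factS natrM.
have e1 : exp m.+1%:R = exp 1 * exp m%:R by rewrite expRD -natr1 addrC.
rewrite e1.
have hm : 0 <= m.+1%:R :> R by apply: ler0n.
apply: (@le_trans _ _ (m.+1%:R * (exp 1 * m%:R ^+ m))).
  by apply: ler_wpM2l => //; apply: succ_pow.
have eg : 0 <= exp 1 by have := e_ge2; lra.
rewrite [X in _ <= X]mulrCA -mulrA.
apply: ler_wpM2l => //; exact: (ler_wpM2l eg IH).
Qed.

Lemma xpow (x : R) k : 0 < x -> x ^+ k = exp (k%:R * ln x).
Proof. by move=> x0; rewrite -{1}(exp_ln x) ?expRX ?mulr_natl //; apply/RltP. Qed.

Lemma binom_bound n t : (0 < n)%N -> (0 < t)%N ->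
  'C(n, t)%:R <= exp (t%:R + t%:R * ln n%:R - t%:R * ln t%:R) :> R.
Proof.
move=> n0 t0.
have nR : 0 < n%:R :> R by rewrite ltr0n.
have tR : 0 < t%:R :> R by rewrite ltr0n.
have h1 : 'C(n, t)%:R * (t`!)%:R <= n%:R ^+ t :> R.
  by rewrite -natrM -natrX ler_nat bin_ffact ffact_le_exp.
have h2 := fact_bound t.
rewrite (xpow _ nR) in h1; rewrite (xpow _ tR) in h2.
have C0 : 0 <= 'C(n, t)%:R :> R by apply: ler0n.
have h3 : 'C(n, t)%:R * exp (t%:R * ln t%:R) <= exp (t%:R + t%:R * ln n%:R).
  apply: le_trans (ler_wpM2l C0 h2) _.
  rewrite -expRD mulrCA; rewrite -[X in _ <= X]mulr1 -?mulrA. 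
  have e0 : 0 <= exp t%:R by apply/RleP/Rlt_le/exp_pos.
  by apply: ler_wpM2l => //; rewrite mulr1.
have ep : 0 < exp (t%:R * ln t%:R) by apply/RltP/exp_pos.
rewrite -expRD.
have -> : 'C(n, t)%:R = 'C(n, t)%:R * exp (t%:R * ln t%:R) * exp (- (t%:R * ln t%:R)) :> R.
  by rewrite -mulrA expRD !RealsE subrr expR0 mulr1.
apply: ler_wpM2r => //; apply/RleP/Rlt_le/exp_pos.
Qed.

Lemma ln_le' (x y : R) : 0 < x -> x <= y -> ln x <= ln y.
Proof.
move=> /RltP x0 /RleP h; apply/RleP.
by case: (Rle_lt_or_eq_dec _ _ h) => [/(ln_increasing _ _ x0)/Rlt_le //| ->]; apply: Rle_refl.
Qed.

End Helpers.

Lemma main_aux n p t : (3 ^ 11 <= n)%N ->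
  Rle 0 p -> Rle p 1 -> Rle (ln (INR n)) (Rmult p (INR n)) ->
    Rle (Rpower (INR n) (Rdiv 24 25)) (INR t) -> Rle (INR t) (Rdiv (INR n) 5) ->
    Rle (Rminus 1 (Rpower (INR n) (Rdiv (Ropp (INR t)) 120))) (@gnp_prob n p (@good n t)).
Proof.
move=> hN /RleP p0 /RleP p1 /RleP hln /RleP ht1 /RleP ht2.
rewrite !INRE in hln ht1 ht2 *.
have n0 : (0 < n)%N by apply: leq_trans hN.
have nR : 0 < n%:R :> R by rewrite ltr0n.
have rp : 0 < Rpower n%:R (24 / 25) by apply/RltP/exp_pos.
have tR : 0 < t%:R :> R by apply: lt_le_trans ht1.
have t0 : (0 < t)%N by rewrite -(ltr0n R).
have lnt : ln (Rpower n%:R (24 / 25)) <= ln t%:R by apply: ln_le'.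
rewrite ln_Rpower in lnt.
have L11 : 11 <= ln n%:R.
  have e3 : exp 1 ^+ 11 <= n%:R.
    apply: (@le_trans _ _ (3 ^+ 11)).
      apply: lerXn2r; rewrite ?nnegrE.
      - by apply/RleP/Rlt_le/exp_pos.
      - by [].
      - by have := exp_le_3 => /RleP; rewrite !RealsE /=.
    by rewrite -natrX ler_nat.
  rewrite expRX in e3.
  have ep : 0 < exp (1 *+ 11) by apply/RltP/exp_pos.
  have := ln_le' ep e3; rewrite ln_exp.
  by rewrite -[X in X <= _ -> _]mulr_natr mul1r.
apply/RleP; rewrite RminusE.
have h5 : 5 * t%:R <= n%:R :> R by move: ht2; rewrite !RealsE /=; lra.
apply: le_trans (fail_bound (p := p) _ h5); last by rewrite p0 p1.
rewrite lerD2l lerN2.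
have hb := binom_bound n0 t0.
have ee : 0 <= exp (Bnd p t n) by apply/RleP/Rlt_le/exp_pos.
apply: le_trans (ler_wpM2r ee hb) _.
rewrite expRD /Rpower; apply: exp_le.
rewrite /Bnd !RealsE /= in lnt hln *.
set L := ln n%:R in L11 hln lnt *.
set lt := ln t%:R in lnt *.
set T := t%:R in tR h5 lnt *.
set N := n%:R in nR h5 hln *.
have A : 24 / 25 * L * T <= lt * T by rewrite ler_wpM2r // ltW.
have B : L * T <= p * N * T by rewrite ler_wpM2r // ltW.
have C : 11 * T <= L * T by rewrite ler_wpM2r // ltW.
nra.
Qed.


Theorem mainTheorem17 :
  exists N : nat, forall n : nat, (N <= n)%nat ->
  forall p : R, Rle 0 p -> Rle p 1 -> Rle (ln (INR n)) (Rmult p (INR n)) ->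
  forall t : nat,
    Rle (Rpower (INR n) (Rdiv 24 25)) (INR t) -> Rle (INR t) (Rdiv (INR n) 5) ->
    Rle (Rminus 1 (Rpower (INR n) (Rdiv (Ropp (INR t)) 120))) (@gnp_prob n p (@good n t)).
Proof.
exists (3 ^ 11)%N => n hN p hp0 hp1 hln t ht1 ht2.
exact: main_aux.
Qed.
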